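(* Let $P$ be an $\alpha$-proper distribution and $\theta^P$ as defined below. For any $y\in\mathcal{B}$, let $y^*$ be a minimizer of $\|\xi-y\|^2_{2,\theta^P}$ over $\xi\in\Xi$. Then $$\|Ay-Ay^*\|_2^2\ge\frac{2}{N\|\theta^P\|_{1,\infty}}\|y-y^*\|^2_{2,\theta^P}.$$
   Context: Let $N,R$ be positive integers; $F_r:2^{[N]}\to\mathbb{R}$ ($r\in[R]$) are submodular with $F_r(\emptyset)=0$, with base polytopes $\mathcal{B}_r=\{u\in\mathbb{R}^N:\sum_{i\in S}u_i\le F_r(S)\ \forall S,\ \sum_{i\in[N]}u_i=F_r([N])\}$ and Lovász extensions $f_r(x)=\max_{u\in\mathcal{B}_r}\langle u,x\rangle$; $\mathcal{B}=\mathcal{B}_1\times\cdots\times\mathcal{B}_R\subseteq(\mathbb{R}^N)^R$; $A:(\mathbb{R}^N)^R\to\mathbb{R}^N$, $Ay=\sum_ry_r$. Element $i$ is incident to $F_r$ if $F_r(S\cup\{i\})\ne F_r(S)$ for some $S\subseteq[N]\setminus\{i\}$; $S_r$ is the set of elements incident to $F_r$; assume every $i$ lies in some $S_r$. For $C\subseteq[R]$, $\mu^C_i=|\{r\in C:i\in S_r\}|$. A distribution $P$ on subsets $C\subseteq[R]$ is $\alpha$-proper ($\alpha\in(0,1)$) if $\mathbb{P}_{C\sim P}(r\in C)=\alpha$ for every $r\in[R]$; then $\theta^P=(\theta^P_1,\dots,\theta^P_R)$ with $\theta^P_r=\mathbb{E}_{C\sim P}[\mu^C\mid r\in C]\in\mathbb{R}^N$.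 For $\theta\in(\mathbb{R}^N_{\ge0})^R$, $\|y\|_{2,\theta}=\sqrt{\sum_r\sum_i\theta_{r,i}y_{r,i}^2}$ and $\|\theta\|_{1,\infty}=\sum_{i\in[N]}\max_{r:\,i\in S_r}\theta_{r,i}$. $x^*$ is the unique minimizer of $\sum_rf_r(x)+\frac12\|x\|_2^2$ and $\Xi=\{\xi\in\mathcal{B}:A\xi=-x^*\}$, the set of minimizers of $\|Ay\|_2^2$ over $\mathcal{B}$. *)

(* Defs.v *)
From HB Require Import structures.
From mathcomp Require Import all_boot all_order all_algebra.
Set Implicit Arguments. Unset Strict Implicit. Unset Printing Implicit Defensive.
Import Order.TTheory GRing.Theory Num.Theory.
Local Open Scope ring_scope.

(* vectors of R^N are functions 'I_N -> R; elements of (R^N)^R are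
   functions 'I_Rn -> 'I_N -> R. *)

Definition submodular (R : realFieldType) (N : nat) (F : {set 'I_N} -> R) :=
  forall A B : {set 'I_N}, F (A :|: B) + F (A :&: B) <= F A + F B.

Definition in_base (R : realFieldType) (N : nat) (F : {set 'I_N} -> R)
    (u : 'I_N -> R) : Prop :=
  (forall S : {set 'I_N}, \sum_(i in S) u i <= F S) /\
  \sum_(i < N) u i = F setT.

Definition in_Bprod (R : realFieldType) (N Rn : nat)
    (F : 'I_Rn -> {set 'I_N} -> R) (y : 'I_Rn -> 'I_N -> R) : Prop :=
  forall r, in_base (F r) (y r).

Definition dotv (R : realFieldType) (N : nat) (u x : 'I_N -> R) : R :=
  \sum_(i < N) u i * x i.

Definition sqnorm (R : realFieldType) (N : nat) (x : 'I_N -> R) : R :=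
  \sum_(i < N) x i ^+ 2.

Definition lovasz_val (R : realFieldType) (N : nat) (F : {set 'I_N} -> R)
    (x : 'I_N -> R) (v : R) : Prop :=
  (exists2 u, in_base F u & dotv u x = v) /\
  (forall u, in_base F u -> dotv u x <= v).

Definition Aop (R : realFieldType) (N Rn : nat) (y : 'I_Rn -> 'I_N -> R)
  : 'I_N -> R := fun i => \sum_(r < Rn) y r i.

Definition incident (R : realFieldType) (N : nat) (F : {set 'I_N} -> R)
    (i : 'I_N) : bool :=
  [exists S : {set 'I_N}, (i \notin S) && (F (i |: S) != F S)].

Definition mu (R : realFieldType) (N Rn : nat) (F : 'I_Rn -> {set 'I_N} -> R)
    (C : {set 'I_Rn}) (i : 'I_N) : R :=
  (#|[set r in C | incident (F r) i]|)%:R.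

Definition distribution (R : realFieldType) (Rn : nat)
    (P : {set 'I_Rn} -> R) : Prop :=
  (forall C, 0 <= P C) /\ \sum_(C : {set 'I_Rn}) P C = 1.

Definition proper_dist (R : realFieldType) (Rn : nat) (alpha : R)
    (P : {set 'I_Rn} -> R) : Prop :=
  distribution P /\ 0 < alpha < 1 /\
  forall r : 'I_Rn, \sum_(C : {set 'I_Rn} | r \in C) P C = alpha.

(* theta^P_r = E_{C~P}[ mu^C | r in C ] = (sum_{C ∋ r} P C mu^C) / P(r in C) *)
Definition thetaP (R : realFieldType) (N Rn : nat)
    (F : 'I_Rn -> {set 'I_N} -> R) (P : {set 'I_Rn} -> R)
    (r : 'I_Rn) (i : 'I_N) : R :=
  (\sum_(C : {set 'I_Rn} | r \in C) P C * mu F C i)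
  / (\sum_(C : {set 'I_Rn} | r \in C) P C).

Definition sqnorm_theta (R : realFieldType) (N Rn : nat)
    (theta y : 'I_Rn -> 'I_N -> R) : R :=
  \sum_(r < Rn) \sum_(i < N) theta r i * y r i ^+ 2.

(* ||theta||_{1,inf} = sum_i max_{r : i in S_r} theta_{r,i}  (theta >= 0,
   and the max ranges over a nonempty set, so 0 is a harmless neutral) *)
Definition norm1inf (R : realFieldType) (N Rn : nat)
    (F : 'I_Rn -> {set 'I_N} -> R) (theta : 'I_Rn -> 'I_N -> R) : R :=
  \sum_(i < N)
    \big[Num.max/0]_(r < Rn | incident (F r) i) theta r i.

(* Main.v *)
Require Import Defs.
From HB Require Import structures.
From mathcomp Require Import all_boot all_order all_algebra.
From mathcomp Require Import ring lra.
From Stdlib Require Import FunctionalExtensionality.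
Import Order.TTheory GRing.Theory Num.Theory.
Local Open Scope ring_scope.
Set Implicit Arguments. Unset Strict Implicit. Unset Printing Implicit Defensive.


Section Tight.
Variables (R : realFieldType) (N : nat) (F : {set 'I_N} -> R).
Hypothesis hsub : submodular F.
Hypothesis hF0 : F set0 = 0.
Variable u : 'I_N -> R.
Hypothesis hu : in_base F u.

Definition tight (S : {set 'I_N}) := \sum_(i in S) u i == F S.

Lemma sum_set_ind (S : {set 'I_N}) (f : 'I_N -> R) :
  \sum_(i in S) f i = \sum_i (if i \in S then f i else 0).
Proof. by rewrite big_mkcond. Qed.

Lemma sum_UI (f : 'I_N -> R) A B : \sum_(i in A :|: B) f i + \sum_(i in A :&: B) f i
  = \sum_(i in A) f i + \sum_(i in B) f i.
Proof.
rewrite !sum_set_ind -!big_split /=; apply: eq_bigr => i _.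
rewrite in_setU in_setI; case: (i \in A); case: (i \in B) => /=; ring.
Qed.

Lemma tightUI A B : tight A -> tight B -> tight (A :|: B) && tight (A :&: B).
Proof.
move=> /eqP hA /eqP hB; have := hsub A B; have := sum_UI u A B.
have h1 := (proj1 hu) (A :|: B); have h2 := (proj1 hu) (A :&: B).
move=> e hs; apply/andP; split; apply/eqP; lra.
Qed.

Lemma tight0 : tight set0.
Proof. by rewrite /tight big_set0 hF0. Qed.

Lemma tightT : tight setT.
Proof.
apply/eqP; rewrite -(proj2 hu); apply: eq_bigl => i; by rewrite in_setT.
Qed.

Lemma tight_bigcup (I : finType) (P : pred I) (T : I -> {set 'I_N}) :
  (forall i, P i -> tight (T i)) -> tight (\bigcup_(i | P i) T i).
Proof.
move=> h; apply: (big_ind tight) => //; first exact: tight0.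
by move=> A B hA hB; case/andP: (tightUI hA hB).
Qed.

Lemma tight_bigcap (I : finType) (P : pred I) (T : I -> {set 'I_N}) :
  (forall i, P i -> tight (T i)) -> tight (\bigcap_(i | P i) T i).
Proof.
move=> h; apply: (big_ind tight) => //; first exact: tightT.
by move=> A B hA hB; case/andP: (tightUI hA hB).
Qed.

End Tight.


Section Level.
Variables (R : realFieldType) (N : nat) (F : {set 'I_N} -> R).
Hypothesis hsub : submodular F.
Hypothesis hF0 : F set0 = 0.
Variable u : 'I_N -> R.
Hypothesis hu : in_base F u.

Definition feas (l k : 'I_N) : bool :=
  [forall S : {set 'I_N}, ((l \in S) && (k \notin S)) ==> (\sum_(i in S) u i < F S)].

Lemma level_tight (c : 'I_N -> R) t :
  (forall l k, feas l k -> c l <= c k) -> tight F u [set i | t <= c i].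
Proof.
move=> hc; set L := [set i | t <= c i].
pose Sel (l k : 'I_N) := odflt setT [pick S : {set 'I_N} | (l \in S) && (k \notin S) && tight F u S].
have hSel : forall l k, l \in L -> k \notin L ->
    (l \in Sel l k) && (k \notin Sel l k) && tight F u (Sel l k).
  move=> l k hl hk; rewrite /Sel; case: pickP => [S -> //|h0].
  exfalso; have : ~~ feas l k.
    apply/negP => /hc; move: hl hk; rewrite !inE => hl hk hlk.
    by move/negP: hk; apply; apply: le_trans hlk.
  move/forallPn=> [S]; rewrite negb_imply => /andP [/andP [hlS hkS]].
  rewrite -leNgt => hF; have := h0 S; rewrite hlS hkS /=.
  by rewrite /tight eq_le hF ((proj1 hu) S).
have -> : L = \bigcup_(l in L) \bigcap_(k | k \notin L) Sel l k.
  apply/setP => i; apply/idP/idP.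
    move=> hi; apply/bigcupP; exists i => //; apply/bigcapP => k hk.
    by case/andP: (hSel i k hi hk) => /andP [].
  move/bigcupP=> [l hl /bigcapP hi]; apply/negPn/negP => hni.
  have := hi i hni; by case/andP: (hSel l i hl hni) => /andP [_ /negP].
apply: tight_bigcup => // l hl; apply: tight_bigcap => // k hk.
by case/andP: (hSel l k hl hk).
Qed.

End Level.

Section Layer.
Variables (R : realFieldType) (N : nat) (F : {set 'I_N} -> R).
Variables (u v : 'I_N -> R).
Hypothesis hu : in_base F u.
Hypothesis hv : in_base F v.

Lemma layer_aux n : forall (U : {set 'I_N}) (c : 'I_N -> R) (m : R),
  (#|U| <= n)%N -> (forall i, i \notin U -> c i = m) ->
  (forall i, i \in U -> m < c i) ->
  (forall t, tight F u [set i | t <= c i]) ->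
  \sum_i c i * (v i - u i) <= 0.
Proof.
have tot : \sum_i (v i - u i) = 0.
  rewrite sumrB (proj2 hu) (proj2 hv); ring.
elim: n => [|n IH] U c m hU hout hin ht.
  have U0 : U = set0 by apply/eqP; rewrite -cards_eq0 -leqn0.
  have -> : \sum_i c i * (v i - u i) = m * \sum_i (v i - u i).
    rewrite mulr_sumr; apply: eq_bigr => i _; rewrite hout // U0 inE //.
  by rewrite tot mulr0.
case: (set_0Vmem U) => [U0|[i0 hi0]].
  have -> : \sum_i c i * (v i - u i) = m * \sum_i (v i - u i).
    rewrite mulr_sumr; apply: eq_bigr => i _; rewrite hout // U0 inE //.
  by rewrite tot mulr0.
case: (arg_minP c hi0) => j hjU0 hjmin0.
have hjU : j \in U := hjU0.
have hjmin : forall i, i \in U -> c j <= c i := hjmin0.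
set m' := c j.
pose c' i := if i \in U then c i else m'.
pose U' := [set i in U | m' < c i].
have hU'U : U' \proper U.
  apply/properP; split; first by apply/subsetP => i; rewrite inE => /andP [].
  by exists j => //; rewrite inE hjU /= ltxx.
have hU' : (#|U'| <= n)%N.
  by have := proper_card hU'U; move=> h; rewrite -ltnS (leq_trans h hU).
have e1 : \sum_i c i * (v i - u i) = \sum_i c' i * (v i - u i)
    - (m' - m) * \sum_i (if i \in U then 0 else v i - u i).
  rewrite mulr_sumr -sumrB; apply: eq_bigr => i _.
  rewrite /c'; case hi: (i \in U); first ring.
  rewrite hout ?hi //; ring.
have e2 : \sum_i (if i \in U then 0 else v i - u i)
    = - (\sum_(i in U) v i - \sum_(i in U) u i).
  rewrite -sumrB big_mkcond /=; apply/eqP; rewrite -addr_eq0.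
  rewrite [\sum_(i in U) _]big_mkcond -big_split /=.
  apply/eqP; rewrite -[RHS]tot; apply: eq_bigr => i _; case: (i \in U); ring.
have e : \sum_i c i * (v i - u i) = \sum_i c' i * (v i - u i)
    + (m' - m) * (\sum_(i in U) v i - \sum_(i in U) u i).
  rewrite e1 e2; ring.
have hUlev : U = [set i | m' <= c i].
  apply/setP => i; rewrite inE; case hi: (i \in U); first by rewrite hjmin.
  by rewrite (hout i) ?hi // leNgt hin.
have htU : \sum_(i in U) u i = F U.
  by apply/eqP; move: (ht m'); rewrite -hUlev.
have hvU := (proj1 hv) U.
have hmm : m < m' by apply: hin.
suff : \sum_i c' i * (v i - u i) <= 0.
  move=> h; rewrite e; have : (m' - m) * (\sum_(i in U) v i - \sum_(i in U) u i) <= 0.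
    rewrite htU; apply: mulr_ge0_le0; lra.
  lra.
apply: (IH U' c' m') => //.
- move=> i; rewrite /c' inE; case hi: (i \in U) => //= hn.
  apply/eqP; rewrite eq_le hjmin // andbT; by rewrite leNgt.
- by move=> i; rewrite /c' inE => /andP [-> ].
- move=> t; case: (leP t m') => htm.
    have -> : [set i | t <= c' i] = setT.
      apply/setP => i; rewrite !inE /c'; case hi: (i \in U) => //.
      by apply: le_trans htm (hjmin _ hi).
    exact: tightT.
  have -> : [set i | t <= c' i] = [set i | t <= c i].
    apply/setP => i; rewrite !inE /c'; case hi: (i \in U) => //.
    rewrite (hout i) ?hi //.
    have h1 : m < t by have := hin j hjU; rewrite -/m'; move: htm; lra.
    by rewrite !leNgt htm h1.
  exact: ht.
Qed.

End Layer.

Lemma term_le_sum (R : realFieldType) (I : finType) (f : I -> R) j :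
  (forall i, 0 <= f i) -> f j <= \sum_i f i.
Proof.
move=> h; rewrite (bigD1 j) //= lerDl; apply: sumr_ge0 => i _; exact: h.
Qed.

Lemma layer_main (R : realFieldType) (N : nat) (F : {set 'I_N} -> R)
  (hsub : submodular F) (hF0 : F set0 = 0) (u v : 'I_N -> R)
  (hu : in_base F u) (hv : in_base F v) (c : 'I_N -> R) :
  (forall l k, feas F u l k -> c l <= c k) ->
  \sum_i c i * (v i - u i) <= 0.
Proof.
move=> hc.
apply: (@layer_aux R N F u v hu hv N setT c (- (\sum_i `|c i|) - 1)).
- by rewrite cardsT card_ord.
- by move=> i; rewrite inE.
- move=> i _; have := @term_le_sum _ _ (fun i => `|c i|) i (fun i => normr_ge0 (c i)).
  have h2 : - c i <= `|c i| by rewrite -normrN ler_norm.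
  move=> h; lra.
- move=> t; exact: level_tight.
Qed.


Section Walk.
Variables (R : realFieldType) (N Rn : nat) (F : 'I_Rn -> {set 'I_N} -> R).
Hypothesis hsub : forall r, submodular (F r).
Hypothesis hF0 : forall r, F r set0 = 0.
Variables (y u theta : 'I_Rn -> 'I_N -> R).
Hypothesis hy : in_Bprod F y.
Hypothesis hu : in_Bprod F u.
Hypothesis htheta : forall r i, 0 <= theta r i.
Hypothesis hopt : forall xi, in_Bprod F xi -> Aop xi = Aop u ->
  sqnorm_theta theta (fun r i => u r i - y r i) <=
  sqnorm_theta theta (fun r i => xi r i - y r i).

Definition g r i := theta r i * (y r i - u r i).
Definition feasR r l k := feas (F r) (u r) l k.
Definition gain r l k := g r l - g r k.

Fixpoint wvalid (x : 'I_N) (p : seq ('I_Rn * 'I_N)) : bool :=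
  if p is (r, k) :: p' then feasR r x k && wvalid k p' else true.
Fixpoint wweight (x : 'I_N) (p : seq ('I_Rn * 'I_N)) : R :=
  if p is (r, k) :: p' then gain r x k + wweight k p' else 0.
Definition wend (x : 'I_N) (p : seq ('I_Rn * 'I_N)) := last x (map snd p).
Fixpoint wdir (x : 'I_N) (p : seq ('I_Rn * 'I_N)) : 'I_Rn -> 'I_N -> R :=
  if p is (r, k) :: p' then
    fun r' i => (if r' == r then (i == x)%:R - (i == k)%:R else 0) + wdir k p' r' i
  else fun _ _ => 0.

Lemma sum_pick (I : finType) (j : I) (f : I -> R) :
  \sum_i (if i == j then f i else 0) = f j.
Proof. by rewrite -big_mkcond big_pred1_eq. Qed.

Lemma sum_pick' (I : finType) (j : I) (f : I -> R) :
  \sum_i f i * (i == j)%:R = f j.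
Proof.
rewrite -[RHS](sum_pick j f); apply: eq_bigr => i _.
by case: (i == j); rewrite ?mulr1 ?mulr0.
Qed.

Lemma wdirD1 x p i : \sum_r wdir x p r i = (i == x)%:R - (i == wend x p)%:R.
Proof.
elim: p x => [|[r k] p IH] x /=; first by rewrite big1 // subrr.
rewrite big_split /= IH sum_pick /wend /=; ring.
Qed.

Lemma sum_ind (I : finType) (j : I) : \sum_i ((i == j)%:R : R) = 1.
Proof.
rewrite -[RHS](sum_pick' j (fun _ => 1)); apply: eq_bigr => i _; by rewrite mul1r.
Qed.

Lemma wdirD3 x p r : \sum_i wdir x p r i = 0.
Proof.
elim: p x => [|[r0 k] p IH] x /=; first by rewrite big1.
rewrite big_split /= IH addr0; case: (r == r0); last by rewrite big1.
by rewrite sumrB !sum_ind subrr.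
Qed.

Lemma wdirD2 x p : \sum_r \sum_i g r i * wdir x p r i = wweight x p.
Proof.
elim: p x => [|[r0 k] p IH] x /=.
  by rewrite big1 // => r _; rewrite big1 // => i _; rewrite mulr0.
rewrite -[RHS]addrC -(IH k).
have -> : \sum_r \sum_i g r i * ((if r == r0 then (i == x)%:R - (i == k)%:R else 0)
    + wdir k p r i) = \sum_r \sum_i g r i * (if r == r0 then (i == x)%:R - (i == k)%:R else 0)
    + \sum_r \sum_i g r i * wdir k p r i.
  rewrite -big_split /=; apply: eq_bigr => r _; rewrite -big_split /=.
  by apply: eq_bigr => i _; rewrite mulrDr.
rewrite addrC; congr (_ + _); rewrite /gain.
rewrite (eq_bigr (fun r => if r == r0 then g r x - g r k else 0)).
  by rewrite sum_pick.
move=> r _; case: (r == r0); last by rewrite big1 // => i _; rewrite mulr0.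
by rewrite (eq_bigr (fun i => g r i * (i == x)%:R - g r i * (i == k)%:R))
  ?sumrB ?sum_pick' // => i _; rewrite mulrBr.
Qed.

Lemma sum_ind_in (S : {set 'I_N}) (j : 'I_N) :
  \sum_(i in S) ((i == j)%:R : R) = (j \in S)%:R.
Proof.
rewrite big_mkcond /= -[RHS](sum_pick j (fun j => (j \in S)%:R)).
by apply: eq_bigr => i _; case: eqP => [->|]; case: (_ \in S).
Qed.

Lemma wdirD4 x p : wvalid x p -> forall r (S : {set 'I_N}),
  0 < \sum_(i in S) wdir x p r i -> \sum_(i in S) u r i < F r S.
Proof.
elim: p x => [|[r0 k] p IH] x /=; first by move=> _ r S; rewrite big1 // ltxx.
move=> /andP [hf hv] r S; rewrite big_split /=.
case: (r =P r0) => [->|_]; last by rewrite big1 // add0r; exact: IH.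
rewrite sumrB !sum_ind_in.
case hx: (x \in S); case hk: (k \in S) => /=.
- by rewrite subrr add0r; exact: IH.
- by move=> _; move/forallP: hf => /(_ S); rewrite hx hk.
- move=> h; apply: (IH k) => //; move: h; rewrite sub0r; lra.
- by rewrite subrr add0r; exact: IH.
Qed.

Lemma closed_nonpos x p : wvalid x p -> wend x p = x -> wweight x p <= 0.
Proof.
move=> hv hc.
set D := wdir x p.
set G := wweight x p.
set K := \sum_r \sum_i theta r i * D r i ^+ 2.
have hK : 0 <= K.
  apply: sumr_ge0 => r _; apply: sumr_ge0 => i _; apply: mulr_ge0 => //.
  exact: sqr_ge0.
pose d r (S : {set 'I_N}) := \sum_(i in S) D r i.
pose term (q : 'I_Rn * {set 'I_N}) := if 0 < d q.1 q.2
  then (F q.1 q.2 - \sum_(i in q.2) u q.1 i) / d q.1 q.2 else 1.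
pose eps0 := \big[Num.min/1]_(q : 'I_Rn * {set 'I_N}) term q.
have he0 : 0 < eps0.
  apply/bigmin_gtP; split => // q _; rewrite /term; case: ifP => h //.
  apply: divr_gt0 => //; have := wdirD4 hv h; rewrite subr_gt0 //.
have hfeas : forall e, 0 < e -> e <= eps0 ->
    in_Bprod F (fun r i => u r i + e * D r i).
  move=> e he hle r; split.
    move=> S; rewrite big_split /= -mulr_sumr.
    have h1 := (proj1 (hu r)) S.
    have := bigmin_le 1 (r, S) term; rewrite -/eps0 /term /=.
    case: ifP => hd hterm.
      have : e <= (F r S - \sum_(i in S) u r i) / d r S by apply: le_trans hle hterm.
      rewrite ler_pdivlMr // /d => h2; lra.
    have : e * d r S <= 0.
      apply: mulr_ge0_le0; first lra.
      by rewrite leNgt hd.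
    rewrite /d; lra.
  by rewrite big_split /= -mulr_sumr wdirD3 mulr0 addr0 (proj2 (hu r)).
have hA : forall e, Aop (fun r i => u r i + e * D r i) = Aop u.
  move=> e; apply: functional_extensionality => i.
  by rewrite /Aop big_split /= -mulr_sumr wdirD1 hc subrr mulr0 addr0.
have hJ : forall e, sqnorm_theta theta (fun r i => u r i + e * D r i - y r i)
    = sqnorm_theta theta (fun r i => u r i - y r i) - 2 * e * G + e ^+ 2 * K.
  move=> e; rewrite /sqnorm_theta /K /G -(wdirD2 x p) -/D.
  rewrite !mulr_sumr -!sumrB -big_split /=; apply: eq_bigr => r _.
  rewrite !mulr_sumr -!sumrB -big_split /=; apply: eq_bigr => i _.
  rewrite /g; ring.
case: (leP G 0) => // hG; exfalso.
pose e := Num.min eps0 (G / (K + 1)).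
have hK1 : 0 < K + 1 by lra.
have he : 0 < e by rewrite lt_min he0 divr_gt0.
have hle : e <= eps0 by rewrite ge_min lexx.
have h2 : e * K + e <= G.
  have : e <= G / (K + 1) by rewrite ge_min lexx orbT.
  by rewrite ler_pdivlMr // mulrDr mulr1.
have := hopt (hfeas e he hle) (hA e); rewrite hJ => h.
have h3 : 0 < e * (2 * G - e * K) by apply: mulr_gt0 => //; lra.
have : e * (2 * G - e * K) = 2 * e * G - e ^+ 2 * K by ring.
lra.
Qed.

Lemma last_take_nth (T : Type) (x z : T) s i : (i < size s)%N ->
  last x (take i.+1 s) = nth z s i.
Proof.
elim: s x i => [|a s IH] x [|i] //= h; first by rewrite take0.
exact: IH.
Qed.

Lemma wvalid_cat x p1 p2 : wvalid x (p1 ++ p2) = wvalid x p1 && wvalid (wend x p1) p2.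
Proof. by elim: p1 x => [|[r k] p IH] x //=; rewrite IH andbA. Qed.

Lemma wweight_cat x p1 p2 :
  wweight x (p1 ++ p2) = wweight x p1 + wweight (wend x p1) p2.
Proof. by elim: p1 x => [|[r k] p IH] x /=; [rewrite add0r | rewrite IH addrA]. Qed.

Lemma wend_cat x p1 p2 : wend x (p1 ++ p2) = wend (wend x p1) p2.
Proof. by rewrite /wend map_cat last_cat. Qed.

Lemma shorten1 p : forall x, wvalid x p -> ~~ uniq (x :: map snd p) ->
  exists p', [/\ (size p' < size p)%N, wvalid x p', wend x p' = wend x p &
     wweight x p <= wweight x p'].
Proof.
elim: p => [|[r k] p IH] x hv //.
rewrite cons_uniq negb_and negbK; case/orP => [hx|hu'].
  set s := map snd ((r, k) :: p).
  have hxs : x \in s by [].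
  set i := index x s.
  have his : (i < size s)%N by rewrite index_mem.
  pose p1 := take i.+1 ((r, k) :: p); pose p2 := drop i.+1 ((r, k) :: p).
  have hp : (r, k) :: p = p1 ++ p2 by rewrite cat_take_drop.
  have he1 : wend x p1 = x.
    rewrite /wend /p1 map_take (last_take_nth x x) //.
    exact: nth_index.
  move: hv; rewrite hp wvalid_cat.
  case/andP => hv1 hv2.
  exists p2; split.
  - by rewrite /p2 size_drop /= subSS ltnS ?cat_take_drop leq_subr.
  - by rewrite -he1.
  - by rewrite wend_cat he1.
  - rewrite wweight_cat he1.
    have := closed_nonpos hv1 he1; lra.
move: hu'; rewrite /= => hu'.
move/andP: hv => [hf hv].
have [p' [h1 h2 h3 h4]] := IH k hv hu'.
exists ((r, k) :: p'); split => //=.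
- by rewrite hf h2.
- lra.
Qed.

Lemma shorten n : forall (x : 'I_N) (p : seq ('I_Rn * 'I_N)), (size p <= n)%N -> wvalid x p ->
  exists p', [/\ uniq (x :: map snd p'), wvalid x p', wend x p' = wend x p &
     wweight x p <= wweight x p'].
Proof.
elim: n => [|n IH] x p hs hv.
  by exists p; move: hs; rewrite leqn0 => /nilP ->.
case hu': (uniq (x :: map snd p)); first by exists p.
have [p1 [h1 h2 h3 h4]] := shorten1 hv (negbT hu').
have [p2 [g1 g2 g3 g4]] := IH x p1 (leq_trans h1 hs) h2.
exists p2; split => //; [by rewrite g3 | lra].
Qed.

Lemma uniq_size_walk (x : 'I_N) (p : seq ('I_Rn * 'I_N)) : uniq (x :: map snd p) -> (size p < N)%N.
Proof.
move=> hu'; have := max_card (mem (x :: map snd p)).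
by rewrite (card_uniqP hu') /= size_map card_ord.
Qed.

Fixpoint bf (t : nat) : 'I_N -> R :=
  if t is t'.+1 then fun k => Num.max (bf t' k)
    (\big[Num.max/bf t' k]_(q : 'I_Rn * 'I_N | feasR q.1 q.2 k) (bf t' q.2 + gain q.1 q.2 k))
  else fun _ => 0.

Lemma bigmax_attained (I : finType) (P : pred I) (f : I -> R) x0 :
  \big[Num.max/x0]_(i | P i) f i = x0 \/
  exists2 i, P i & \big[Num.max/x0]_(i | P i) f i = f i.
Proof.
apply: (big_ind (fun z => z = x0 \/ exists2 i, P i & z = f i)).
- by left.
- move=> a b ha hb /=; case: (leP a b) => hab.
    exact: hb.
  exact: ha.
- by move=> i hi; right; exists i.
Qed.

Lemma le_bigmaxr (I : finType) (P : pred I) (f : I -> R) x0 j :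
  P j -> f j <= \big[Num.max/x0]_(i | P i) f i.
Proof.
have := mem_index_enum j; rewrite unlock; elim: (index_enum I) => //= i l ih.
rewrite inE => /orP [/eqP-> ->|/ih h Pj]; first by rewrite le_max lexx.
by case: ifPn => Pi; [rewrite le_max h // orbT | exact: h].
Qed.

Lemma bf_ge0 t k : 0 <= bf t k.
Proof. by elim: t k => [|t IH] k //=; rewrite le_max IH. Qed.

Lemma bf_attained t : forall k, exists (x : 'I_N) (p : seq ('I_Rn * 'I_N)),
  [/\ wvalid x p, wend x p = k, (size p <= t)%N & wweight x p = bf t k].
Proof.
elim: t => [|t IH] k; first by exists k, [::].
rewrite /=; case: (leP (\big[Num.max/bf t k]_(q : 'I_Rn * 'I_N | feasR q.1 q.2 k)
   (bf t q.2 + gain q.1 q.2 k)) (bf t k)) => hle.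
  have [x [p [h1 h2 h3 h4]]] := IH k.
  by exists x, p; split => //; apply: leq_trans h3 _.
case: (bigmax_attained (fun q : 'I_Rn * 'I_N => feasR q.1 q.2 k)
   (fun q : 'I_Rn * 'I_N => bf t q.2 + gain q.1 q.2 k) (bf t k)) => [->|[[r l] /= hf ->]].
  have [x [p [h1 h2 h3 h4]]] := IH k.
  by exists x, p; split => //; apply: leq_trans h3 _.
have [x [p [h1 h2 h3 h4]]] := IH l.
exists x, (p ++ [:: (r, k)]); split.
- by rewrite wvalid_cat h1 h2 /= hf.
- by rewrite wend_cat h2.
- by rewrite size_cat addn1.
- by rewrite wweight_cat h4 h2 /= addr0.
Qed.

Lemma bf_upper t : forall (x : 'I_N) (p : seq ('I_Rn * 'I_N)), wvalid x p -> (size p <= t)%N ->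
  wweight x p <= bf t (wend x p).
Proof.
elim: t => [|t IH] x p hv hs.
  by move: hs; rewrite leqn0 => /nilP -> /=.
case/lastP: p hv hs => [|p [r k]] hv hs.
  exact: (bf_ge0 t.+1 x).
move: hv hs; rewrite -cats1 wvalid_cat wweight_cat wend_cat size_cat addn1 ltnS.
case/andP => hv /= /andP [hf _] hs.
rewrite addr0 /wend /=.
have h1 := IH x p hv hs.
have h2 : bf t (wend x p) + gain r (wend x p) k <= bf t.+1 k.
  rewrite /= le_max; apply/orP; right.
  exact: (@le_bigmaxr _ (fun q : 'I_Rn * 'I_N => feasR q.1 q.2 k) (fun q : 'I_Rn * 'I_N => bf t q.2 + gain q.1 q.2 k) (bf t k) (r, wend x p) hf).
apply: le_trans h2; by rewrite lerD2r.
Qed.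

Definition q := bf N.

Lemma q_ge0 k : 0 <= q k.
Proof. exact: bf_ge0. Qed.

Lemma q_pot r l k : feasR r l k -> q l + gain r l k <= q k.
Proof.
move=> hf; have [x [p [h1 h2 h3 h4]]] := bf_attained N l.
have hv : wvalid x (p ++ [:: (r, k)]) by rewrite wvalid_cat h1 h2 /= hf.
have [p' [g1 g2 g3 g4]] := shorten (leqnn _) hv.
have := bf_upper g2 (ltnW (uniq_size_walk g1)).
rewrite g3 wend_cat h2 /= => h.
move: g4; rewrite wweight_cat h4 h2 /= addr0 /q => g4; lra.
Qed.

Definition H k := \big[Num.max/0]_(a : 'I_Rn) \big[Num.max/0]_(b : 'I_Rn)
  Num.max `|g b k - g a k| `|g a k|.

Lemma H_ge0 k : 0 <= H k.
Proof.
apply: (big_ind (fun z => 0 <= z)) => //; first by move=> a b ha hb; rewrite le_max ha.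
move=> a _; apply: (big_ind (fun z => 0 <= z)) => //; first by move=> c d hc hd; rewrite le_max hc.
by move=> b _; rewrite le_max normr_ge0.
Qed.

Lemma H_both a b k : Num.max `|g b k - g a k| `|g a k| <= H k.
Proof.
apply: le_trans (@le_bigmaxr _ xpredT (fun a => \big[Num.max/0]_(b : 'I_Rn)
  Num.max `|g b k - g a k| `|g a k|) 0 a isT).
exact: (@le_bigmaxr _ xpredT (fun b => Num.max `|g b k - g a k| `|g a k|) 0 b isT).
Qed.

Lemma H_diff a b k : `|g b k - g a k| <= H k.
Proof. by apply: le_trans (H_both a b k); rewrite le_max lexx. Qed.

Lemma H_abs a k : `|g a k| <= H k.
Proof. by apply: le_trans (H_both a a k); rewrite le_max lexx orbT. Qed.

Lemma walk_bound (p : seq ('I_Rn * 'I_N)) : forall (x : 'I_N) (c : R),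
  uniq (x :: map snd p) -> (forall b, `|c + g b x| <= H x) -> `|c| <= H x ->
  c + wweight x p <= \sum_(k <- x :: map snd p) H k.
Proof.
elim: p => [|[r k] p IH] x c hu' hb hc /=.
  by rewrite big_seq1 addr0; apply: le_trans (ler_norm c) hc.
rewrite big_cons; move: hu'; rewrite cons_uniq => /andP [_ hu'].
have h1 : c + g r x <= H x by apply: le_trans (ler_norm _) (hb r).
have h2 := IH k (- g r k) hu'.
have h3 : - g r k + wweight k p <= \sum_(j <- k :: map snd p) H j.
  apply: h2.
    by move=> b; rewrite addrC H_diff.
  by rewrite normrN H_abs.
rewrite /gain; lra.
Qed.

Lemma sum_uniq_le (s : seq 'I_N) (f : 'I_N -> R) : uniq s -> (forall i, 0 <= f i) ->
  \sum_(i <- s) f i <= \sum_i f i.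
Proof.
move=> hs hf; rewrite (big_uniq _ hs) /= [X in _ <= X]big_mkcond /= big_mkcond /=.
by apply: ler_sum => i _; case: (i \in s) => //; exact: hf.
Qed.

Lemma q_le k : q k <= \sum_j H j.
Proof.
have [x [p [h1 h2 h3 h4]]] := bf_attained N k.
have [p' [g1 g2 g3 g4]] := shorten (leqnn _) h1.
have hb0 : forall b, `|0 + g b x| <= H x by move=> b; rewrite add0r H_abs.
have hc0 : `|0 : R| <= H x by rewrite normr0 H_ge0.
have := walk_bound g1 hb0 hc0; rewrite add0r => h5.
have := sum_uniq_le g1 H_ge0; rewrite /q; lra.
Qed.

Definition dd i := Aop y i - Aop u i.

Lemma per_r r : \sum_i (g r i + q i) * (y r i - u r i) <= 0.
Proof.
apply: (@layer_main R N (F r) (hsub r) (hF0 r) (u r) (y r) (hu r) (hy r)).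
move=> l k hf; have := q_pot (r := r) hf; rewrite /gain; lra.
Qed.

Lemma main_sum : sqnorm_theta theta (fun r i => y r i - u r i) + \sum_i q i * dd i <= 0.
Proof.
have e1 : sqnorm_theta theta (fun r i => y r i - u r i) + \sum_i q i * dd i
    = \sum_r \sum_i (g r i + q i) * (y r i - u r i).
  have -> : \sum_i q i * dd i = \sum_r \sum_i q i * (y r i - u r i).
    rewrite exchange_big /=; apply: eq_bigr => i _.
    by rewrite /dd /Aop -sumrB mulr_sumr.
  rewrite /sqnorm_theta -big_split /=; apply: eq_bigr => r _.
  rewrite -big_split /=; apply: eq_bigr => i _; rewrite /g; ring.
rewrite e1; apply: sumr_le0 => r _; exact: per_r.
Qed.

Lemma main_ineq : sqnorm_theta theta (fun r i => y r i - u r i) <=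
  (\sum_j H j) * \sum_i Num.max 0 (- dd i).
Proof.
have h := main_sum.
suff : - \sum_i q i * dd i <= (\sum_j H j) * \sum_i Num.max 0 (- dd i) by lra.
rewrite -sumrN mulr_sumr; apply: ler_sum => i _.
have hq := q_ge0 i; have hq2 := q_le i.
have hm0 : 0 <= Num.max 0 (- dd i) by rewrite le_max lexx.
have hm1 : - dd i <= Num.max 0 (- dd i) by rewrite le_max lexx orbT.
have hH : 0 <= \sum_j H j by apply: sumr_ge0 => j _; exact: H_ge0.
rewrite -mulrN; apply: le_trans (_ : q i * Num.max 0 (- dd i) <= _).
  by apply: ler_wpM2l.
by apply: ler_wpM2r.
Qed.

Variable M : 'I_N -> R.
Hypothesis hM0 : forall k, 0 <= M k.
Hypothesis hM : forall r k, g r k ^+ 2 <= M k * (theta r k * (y r k - u r k) ^+ 2).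

Definition S k := \sum_r theta r k * (y r k - u r k) ^+ 2.

Lemma S_ge0 k : 0 <= S k.
Proof. apply: sumr_ge0 => r _; apply: mulr_ge0 => //; exact: sqr_ge0. Qed.

Lemma sumg k : \sum_r g r k ^+ 2 <= M k * S k.
Proof. rewrite /S mulr_sumr; apply: ler_sum => r _; exact: hM. Qed.

Lemma pair_le (f : 'I_Rn -> R) a b : a != b -> (forall r, 0 <= f r) ->
  f a + f b <= \sum_r f r.
Proof.
move=> hab hf; rewrite (bigD1 a) //= (bigD1 b) /=; last by rewrite eq_sym hab.
rewrite addrA lerDl; apply: sumr_ge0 => r _; exact: hf.
Qed.

Lemma normK' (x : R) : `|x| ^+ 2 = x ^+ 2.
Proof. exact: real_normK (num_real x). Qed.

Lemma H_sq k : H k ^+ 2 <= 2 * M k * S k.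
Proof.
have hB : 0 <= 2 * M k * S k by apply: mulr_ge0; [apply: mulr_ge0 => //; exact: hM0|exact: S_ge0].
have hMS := sumg k.
have hg : forall a, g a k ^+ 2 <= \sum_r g r k ^+ 2.
  by move=> a; apply: (@term_le_sum _ _ (fun r => g r k ^+ 2)) => r; exact: sqr_ge0.
have P_max : forall a b : R, 0 <= a /\ a ^+ 2 <= 2 * M k * S k ->
    0 <= b /\ b ^+ 2 <= 2 * M k * S k -> 0 <= Num.max a b /\ Num.max a b ^+ 2 <= 2 * M k * S k.
  move=> a b ha hb; case: (leP a b) => _ //.
suff : 0 <= H k /\ H k ^+ 2 <= 2 * M k * S k by case.
apply: (big_ind (fun z => 0 <= z /\ z ^+ 2 <= 2 * M k * S k)) => //.
  by split; rewrite ?expr0n /=.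
move=> a _; apply: (big_ind (fun z => 0 <= z /\ z ^+ 2 <= 2 * M k * S k)) => //.
  by split; rewrite ?expr0n /=.
move=> b _; apply: P_max; split; rewrite ?normr_ge0 // normK'.
  case: (eqVneq a b) => [->|hab].
    by rewrite subrr expr0n.
  have := @pair_le (fun r => g r k ^+ 2) a b hab (fun r => sqr_ge0 _).
  have : (g b k - g a k) ^+ 2 <= 2 * (g a k ^+ 2 + g b k ^+ 2).
    have : 0 <= (g a k + g b k) ^+ 2 by exact: sqr_ge0.
    move=> h; nra.
  move=> h1 h2; nra.
have := hg a; nra.
Qed.

End Walk.


Section Alg.
Variable R : realFieldType.

Lemma amgm2 (X Y Z : R) : 0 <= X -> 0 <= Y -> 0 <= Z -> Z ^+ 2 <= X * Y -> 2 * Z <= X + Y.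
Proof.
move=> hX hY hZ h; case: (leP (2 * Z) (X + Y)) => // hlt.
have h2 : 0 < (2 * Z - (X + Y)) * (2 * Z + (X + Y)) by apply: mulr_gt0; lra.
have h1 : 0 <= (X - Y) ^+ 2 by exact: sqr_ge0.
nra.
Qed.

Lemma cs (I : finType) (a m b : I -> R) : (forall k, 0 <= a k) -> (forall k, 0 <= m k) ->
  (forall k, 0 <= b k) -> (forall k, a k ^+ 2 <= m k * b k) ->
  (\sum_k a k) ^+ 2 <= (\sum_k m k) * (\sum_k b k).
Proof.
move=> ha hm hb h.
have e1 : (\sum_k a k) ^+ 2 = \sum_k \sum_l a k * a l.
  by rewrite expr2 mulr_suml; apply: eq_bigr => k _; rewrite mulr_sumr.
have e2 : (\sum_k m k) * (\sum_k b k) = \sum_k \sum_l m k * b l.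
  by rewrite mulr_suml; apply: eq_bigr => k _; rewrite mulr_sumr.
have e3 : (\sum_k m k) * (\sum_k b k) = \sum_k \sum_l m l * b k.
  by rewrite e2 exchange_big.
suff : 2 * (\sum_k a k) ^+ 2 <= 2 * ((\sum_k m k) * (\sum_k b k)) by lra.
have -> : 2 * ((\sum_k m k) * (\sum_k b k)) = \sum_k \sum_l (m k * b l + m l * b k).
  rewrite mulr2n mulrDl mul1r {1}e2 e3 -big_split /=.
  by apply: eq_bigr => k _; rewrite -big_split.
rewrite e1 mulr_sumr; apply: ler_sum => k _; rewrite mulr_sumr; apply: ler_sum => l _.
apply: amgm2.
- by apply: mulr_ge0.
- by apply: mulr_ge0.
- by apply: mulr_ge0.
- have := h k; have := h l; move=> hl hk.
  rewrite exprMn; have -> : m k * b l * (m l * b k) = (m k * b k) * (m l * b l) by ring.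
  apply: ler_pM => //; exact: sqr_ge0.
Qed.

End Alg.


Lemma nonincident_zero (R : realFieldType) (N : nat) (F : {set 'I_N} -> R)
  (hF0 : F set0 = 0) (v : 'I_N -> R) (hv : in_base F v) i :
  ~~ incident F i -> v i = 0.
Proof.
move=> hni.
have hF : forall S : {set 'I_N}, i \notin S -> F (i |: S) = F S.
  move=> S hS; apply/eqP; move: hni; rewrite /incident negb_exists => /forallP /(_ S).
  by rewrite hS /= negbK.
have h1 : v i <= 0.
  have := (proj1 hv) [set i]; rewrite big_set1.
  by rewrite -[[set i]]setU0 hF ?inE // hF0.
have h2 : 0 <= v i.
  have := (proj1 hv) (~: [set i]).
  have -> : F (~: [set i]) = F setT.
    by rewrite -(hF (~: [set i])) ?setUCr // !inE eqxx.
  have e1 : \sum_(j in ~: [set i]) v j = \sum_(j | j != i) v j.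
    by apply: eq_bigl => j; rewrite !inE.
  have e2 := proj2 hv; rewrite (bigD1 i) //= in e2.
  lra.
lra.
Qed.

Unset Implicit Arguments.
Set Strict Implicit.

Theorem lemma3p9 (R : realFieldType) (N Rn : nat)
  (F : 'I_Rn -> {set 'I_N} -> R)
  (hN : (0 < N)%N) (hR : (0 < Rn)%N)
  (hsub : forall r, submodular (F r))
  (hF0 : forall r, F r set0 = 0)
  (hcover : forall i : 'I_N, exists r, incident (F r) i)
  (xstar : 'I_N -> R)
  (hxstar : exists2 fx : 'I_Rn -> R,
      (forall r, lovasz_val (F r) xstar (fx r)) &
      forall (x : 'I_N -> R) (fy : 'I_Rn -> R),
        (forall r, lovasz_val (F r) x (fy r)) ->
        \sum_(r < Rn) fx r + sqnorm xstar / 2 <=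
        \sum_(r < Rn) fy r + sqnorm x / 2)
  (alpha : R) (P : {set 'I_Rn} -> R) (hP : proper_dist alpha P)
  (y ystar : 'I_Rn -> 'I_N -> R)
  (hy : in_Bprod F y)
  (hystarXi : in_Bprod F ystar /\ Aop ystar = (fun i => - xstar i))
  (hystar_min : forall xi : 'I_Rn -> 'I_N -> R,
      in_Bprod F xi -> Aop xi = (fun i => - xstar i) ->
      sqnorm_theta (thetaP F P) (fun r i => ystar r i - y r i) <=
      sqnorm_theta (thetaP F P) (fun r i => xi r i - y r i)) :
  sqnorm (fun i => Aop y i - Aop ystar i) >=
    2 / (N%:R * norm1inf F (thetaP F P)) *
    sqnorm_theta (thetaP F P) (fun r i => y r i - ystar r i).
Proof.
set th := thetaP F P.
have [hu hA] := hystarXi.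
have hP0 : forall C, 0 <= P C by case: hP => [[h _] _].
have htheta : forall r i, 0 <= th r i.
  move=> r i; rewrite /th /thetaP; apply: divr_ge0; apply: sumr_ge0 => C _ //.
  by apply: mulr_ge0 => //; rewrite /mu ler0n.
have hopt : forall xi, in_Bprod F xi -> Aop xi = Aop ystar ->
    sqnorm_theta th (fun r i => ystar r i - y r i) <=
    sqnorm_theta th (fun r i => xi r i - y r i).
  by move=> xi h1 h2; apply: hystar_min => //; rewrite h2 hA.
pose M i := \big[Num.max/0]_(r < Rn | incident (F r) i) th r i.
have hM0 : forall k, 0 <= M k.
  move=> k; apply: (big_ind (fun z => 0 <= z)) => //.
  by move=> a b ha hb; rewrite le_max ha.
have hM : forall r k, g y ystar th r k ^+ 2 <=
    M k * (th r k * (y r k - ystar r k) ^+ 2).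
  move=> r k; rewrite /g; case hi: (incident (F r) k).
    have hle : th r k <= M k.
      exact: (@le_bigmaxr _ _ (fun r => incident (F r) k) (fun r => th r k) 0 r hi).
    rewrite exprMn expr2 -mulrA; apply: ler_wpM2r => //.
    by apply: mulr_ge0 => //; exact: sqr_ge0.
  have h1 := nonincident_zero (hF0 r) (hy r) (negbT hi).
  have h2 := nonincident_zero (hF0 r) (hu r) (negbT hi).
  by rewrite h1 h2 subrr mulr0 expr0n /= mulr0 mulr0.
set W := sqnorm_theta th (fun r i => y r i - ystar r i).
have hmain := main_ineq hsub hF0 hy hu htheta hopt.
set Q := \sum_j H y ystar th j in hmain.
set Fm := \sum_i Num.max 0 (- dd y ystar i) in hmain.
have hW0 : 0 <= W.
  apply: sumr_ge0 => r _; apply: sumr_ge0 => i _; apply: mulr_ge0 => //; exact: sqr_ge0.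
have hQ0 : 0 <= Q by apply: sumr_ge0 => j _; exact: H_ge0.
have hFm0 : 0 <= Fm by apply: sumr_ge0 => i _; rewrite le_max lexx.
have hWS : W = \sum_k S y ystar th k.
  by rewrite /W /sqnorm_theta /S exchange_big.
have hQ2 : Q ^+ 2 <= (\sum_k 2 * M k) * W.
  rewrite hWS; apply: cs.
  - by move=> k; exact: H_ge0.
  - by move=> k; apply: mulr_ge0 => //.
  - by move=> k; exact: S_ge0.
  - move=> k; exact: (H_sq htheta hM0 hM).
set T := norm1inf F th.
have hT : \sum_k 2 * M k = 2 * T by rewrite -mulr_sumr.
rewrite hT in hQ2.
have hT0 : 0 <= T by apply: sumr_ge0 => i _; exact: hM0.
set D2 := sqnorm (fun i => Aop y i - Aop ystar i).
have hsumd : \sum_i dd y ystar i = 0.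
  rewrite /dd /Aop sumrB exchange_big [X in _ - X]exchange_big /= -sumrB.
  apply: big1 => r _; rewrite (proj2 (hy r)) (proj2 (hu r)); ring.
have habs : \sum_i `|dd y ystar i| = 2 * Fm.
  have e : forall x : R, `|x| = 2 * Num.max 0 (- x) + x.
    move=> x; case: (leP 0 x) => hx.
      rewrite ger0_norm // max_l; last lra; ring.
    rewrite ltr0_norm // max_r; last lra; ring.
  rewrite (eq_bigr _ (fun i _ => e (dd y ystar i))) big_split /= hsumd addr0.
  by rewrite -mulr_sumr.
have hD2 : (2 * Fm) ^+ 2 <= N%:R * D2.
  rewrite -habs.
  have := @cs R _ (fun i => `|dd y ystar i|) (fun _ => 1) (fun i => dd y ystar i ^+ 2).
  rewrite sumr_const card_ord => h; apply: h.
  - by move=> k; exact: normr_ge0.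
  - by move=> k; exact: ler01.
  - by move=> k; exact: sqr_ge0.
  - by move=> k; rewrite mul1r normK'.
have hN0 : 0 < (N%:R : R) by rewrite ltr0n.
have hD20 : 0 <= D2 by apply: sumr_ge0 => i _; exact: sqr_ge0.
have key : 2 * W <= N%:R * T * D2.
  case: (leP W 0) => hW.
    have : 0 <= N%:R * T * D2 by apply: mulr_ge0 => //; apply: mulr_ge0 => //; lra.
    lra.
  have h1 : W * W <= (Q * Fm) ^+ 2.
    rewrite expr2; apply: ler_pM => //.
  have h2 : (Q * Fm) ^+ 2 <= 2 * T * W * Fm ^+ 2.
    rewrite exprMn; apply: ler_wpM2r; [exact: sqr_ge0 | lra].
  have h3 : 4 * (Fm ^+ 2) <= N%:R * D2.
    by move: hD2; rewrite exprMn; have -> : (2 : R) ^+ 2 = 4 by rewrite expr2; ring.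
  have h4 : 4 * (W * W) <= (2 * T * W) * (N%:R * D2).
    apply: le_trans (_ : 4 * (2 * T * W * Fm ^+ 2) <= _).
      by rewrite ler_pM2l; [lra | lra].
    have -> : 4 * (2 * T * W * Fm ^+ 2) = (2 * T * W) * (4 * Fm ^+ 2) by ring.
    apply: ler_wpM2l => //; apply: mulr_ge0 => //; lra.
  have h5 : 0 < W by lra.
  have : W * (2 * W) <= W * (N%:R * T * D2).
    have -> : W * (N%:R * T * D2) = (2 * T * W) * (N%:R * D2) / 2 by field.
    have -> : W * (2 * W) = 4 * (W * W) / 2 by field.
    by rewrite ler_pM2r // invr_gt0; lra.
  by rewrite ler_pM2l.
change (2 / (N%:R * T) * W <= D2); case: (leP T 0) => hT1.
  have -> : T = 0 by lra.
  by rewrite mulr0 invr0 mulr0 mul0r.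
have hNT : 0 < N%:R * T by apply: mulr_gt0.
rewrite mulrAC ler_pdivrMr //.
have -> : D2 * (N%:R * T) = N%:R * T * D2 by ring.
exact: key.
Qed.
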